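(* Let $(a_n)_{n\ge1}$ be real with $|a_n|\le1$, $\gamma_n=\operatorname{sign}(a_n)$, and let $N_1<N_2<\cdots$ be integers with $\lim_{j\to\infty}\frac1{N_j}\sum_{n=1}^{N_j}|a_n|=\theta>0$. For each sufficiently large $j$ let $m=m(j)$ be the unique index with $q_{m+1}/3\le N_j<q_{m+2}/3$, and put $q=q_{m}$, $M=\lfloor N_j/q\rfloor$, $M'=\lfloor qM/(q-1)\rfloor$. Then for all sufficiently large $j$, either there is $c\in\{0,\dots,q-1\}$ with $$A^{q,M}_{c,c}\ge\frac{\theta}{8q},$$ or there is $d\in\{0,\dots,q-2\}$ with $$-A^{q-1,M'}_{d+1,d}\ge\frac{\theta}{8q}.$$
   Context: Fix integers $2\le q_1<q_2<\cdots$ such that $q_{k+1}>q_k^4+3q_k$ for every $k\ge1$. (In the paper's notation, $q=q^{(i')}_{k'}$ where $q^{(0)}_k=q_{2k}$, $q^{(1)}_k=q_{2k+1}$, and $q-1=q^{(i'+2)}_{k'}$.) For integers $q,M\ge1$ and $r,c\ge0$ set $$A^{q,M}_{r,c}=\frac1{qM}\sum_{b=r}^{q-1+r}\sum_{n=1}^M\gamma(qn+c)\,a(qn+b).$$ *)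

(* Defs.v *)
From HB Require Import structures.
From mathcomp Require Import all_boot all_order all_algebra.
From mathcomp Require Import all_classical all_reals all_analysis.
Set Implicit Arguments. Unset Strict Implicit. Unset Printing Implicit Defensive.
Import Order.TTheory GRing.Theory Num.Theory.
Local Open Scope ring_scope.

Definition gamma (R : realType) (a : nat -> R) (n : nat) : R := Num.sg (a n).

Definition Aqm (R : realType) (a : nat -> R) (q M r c : nat) : R :=
  ((q * M)%:R)^-1 *
  \sum_(r <= b < q + r) \sum_(1 <= n < M.+1)
      gamma a (q * n + c) * a (q * n + b).

(* Main.v *)
Require Import Defs.
From HB Require Import structures.
From mathcomp Require Import all_boot all_order all_algebra.
From mathcomp Require Import all_classical all_reals all_analysis.
From mathcomp Require Import zify ring lra.
Import Order.TTheory GRing.Theory Num.Theory.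
Import numFieldNormedType.Exports.
Local Open Scope classical_set_scope.
Local Open Scope ring_scope.

Lemma sgM_self (R : realType) (x : R) : Num.sg x * x = `|x|.
Proof. by rewrite -{2}(mulr_sg_norm x) mulrA -expr2 sqr_sg; case: eqP => [->|_]; rewrite ?normr0 ?mulr0 ?mul1r. Qed.

Lemma blockL (R : realType) (f : nat -> R) q M :
  \sum_(1 <= n < M.+1) \sum_(0 <= c < q) f (q*n + c)%N = \sum_(q <= x < q * M.+1) f x.
Proof.
elim: M => [|M IH]; first by rewrite !big_geq ?muln1.
rewrite big_nat_recr //= IH (big_cat_nat _ (n := q * M.+1) (p := q * M.+2)); [|lia|lia].
congr (_ + _).
rewrite -[in RHS](add0n (q * M.+1)%N) big_addn.
have -> : (q * M.+2 - q * M.+1 = q)%N by rewrite !mulnS; lia.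
by apply: eq_bigr => i _; rewrite addnC.
Qed.

Lemma shift_sum (R : realType) (f : nat -> R) c n :
  \sum_(c <= b < n + c) f b = \sum_(0 <= t < n) f (c + t)%N.
Proof. by rewrite -{1}(add0n c) big_addn addnK; apply: eq_bigr => t _; rewrite addnC. Qed.

Lemma T1eq (R : realType) (a : nat -> R) q M : (0 < q * M)%N ->
  \sum_(0 <= c < q) (Aqm a q M c c * (q * M)%:R) =
  \sum_(0 <= t < q) \sum_(q <= x < q * M.+1) gamma a x * a (x + t)%N.
Proof.
move=> qM0.
transitivity (\sum_(0 <= c < q) \sum_(0 <= t < q) \sum_(1 <= n < M.+1)
   gamma a (q * n + c)%N * a ((q * n + c) + t)%N).
  apply: eq_bigr => c _; rewrite /Aqm mulrC mulrA mulfV ?mul1r; last by rewrite pnatr_eq0 -lt0n.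
  rewrite shift_sum; apply: eq_bigr => t _; apply: eq_bigr => n _; by congr (_ * a _); apply: addnA.
rewrite exchange_big_nat; apply: eq_bigr => t _.
rewrite exchange_big_nat /=.
exact: (@blockL R (fun x => gamma a x * a (x + t)%N)).
Qed.

Lemma T2eq (R : realType) (a : nat -> R) q M : (0 < q * M)%N ->
  \sum_(0 <= d < q) (Aqm a q M d.+1 d * (q * M)%:R) =
  \sum_(0 <= t < q) \sum_(q <= x < q * M.+1) gamma a x * a (x + t.+1)%N.
Proof.
move=> qM0.
transitivity (\sum_(0 <= c < q) \sum_(0 <= t < q) \sum_(1 <= n < M.+1)
   gamma a (q * n + c)%N * a ((q * n + c) + t.+1)%N).
  apply: eq_bigr => c _; rewrite /Aqm mulrC mulrA mulfV ?mul1r; last by rewrite pnatr_eq0 -lt0n.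
  rewrite shift_sum; apply: eq_bigr => t _; apply: eq_bigr => n _; by congr (_ * a _); change ((q * n + (c.+1 + t))%N = (q * n + c + t.+1)%N); lia.
rewrite exchange_big_nat; apply: eq_bigr => t _.
rewrite exchange_big_nat /=.
exact: (@blockL R (fun x => gamma a x * a (x + t.+1)%N)).
Qed.

Lemma sum_le_len (R : realType) (f : nat -> R) lo hi :
  (forall x, (lo <= x < hi)%N -> `|f x| <= 1) ->
  `|\sum_(lo <= x < hi) f x| <= (hi - lo)%:R.
Proof.
move=> h; apply: le_trans; first exact: ler_norm_sum.
rewrite -sumr_const_nat; exact: ler_sum_nat.
Qed.

Lemma diff_bound (R : realType) (f : nat -> R) p hi1 hi2 :
  (forall x, (1 <= x)%N -> `|f x| <= 1) -> (0 < p)%N ->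
  (p.+1 <= hi2)%N -> (hi2 <= hi1)%N -> (hi1 <= hi2 + p)%N ->
  - (p.+1)%:R <= \sum_(p.+1 <= x < hi1) f x - \sum_(p <= x < hi2) f x.
Proof.
move=> hf p0 h1 h2 h3.
rewrite (big_cat_nat _ (n := hi2)) //= (big_ltn (m := p)) ?(ltnW h1) //.
have hB : `|\sum_(hi2 <= x < hi1) f x| <= p%:R.
  apply: le_trans (@sum_le_len R f hi2 hi1 _) _.
    by move=> x /andP[hx _]; apply: hf; lia.
  by rewrite ler_nat; lia.
have hp : `|f p| <= 1 by apply: hf.
move: hB hp; rewrite !ler_norml => /andP[hB1 _] /andP[_ hp2].
rewrite -natr1; lra.
Qed.

Theorem mainTheorem8 (R : realType) (qs : nat -> nat) (a : nat -> R)
    (N : nat -> nat) (theta : R) :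
  (2 <= qs 1)%N ->
  (forall k, (1 <= k)%N -> (qs k < qs k.+1)%N) ->
  (forall k, (1 <= k)%N -> (qs k ^ 4 + 3 * qs k < qs k.+1)%N) ->
  (forall n, (1 <= n)%N -> `|a n| <= 1) ->
  (forall j, (N j < N j.+1)%N) ->
  0 < theta ->
  (fun j => ((N j)%:R)^-1 * \sum_(1 <= n < (N j).+1) `|a n|) @ \oo --> theta ->
  exists J : nat, forall j : nat, (J <= j)%N ->
    forall m : nat, (1 <= m)%N ->
      ((qs m.+1)%:R / 3 <= (N j)%:R :> R) -> ((N j)%:R < (qs m.+2)%:R / 3 :> R) ->
      let q := qs m in
      let M := (N j %/ q)%N in
      let M' := ((q * M) %/ (q - 1))%N in
      (exists c : nat, (c < q)%N /\ theta / (8 * q%:R) <= Aqm a q M c c)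
      \/
      (exists d : nat, (d <= q - 2)%N /\
         theta / (8 * q%:R) <= - Aqm a (q - 1) M' d.+1 d).
Proof.
move=> hq1 hinc hgrow ha hN hth hlim.
have hqk : forall k, (1 <= k)%N -> (k <= qs k)%N.
  elim=> // k IH hk; case: k IH hk => [|k] IH _; first by apply: leq_trans hq1.
  by have := IH isT; have := hinc k.+1 isT; lia.
have hNj : forall j, (j <= N j)%N.
  by elim=> // j IH; have := hN j; lia.
pose K := (Num.trunc (24 / theta)).+1.
have hK : 24 / theta < K%:R by apply: truncnS_gt.
pose B := (\max_(i < K.+1) qs i.+2)%N.
have [J1 _ HJ1] := cvgr_gt theta hlim (theta / 2) ltac:(lra).
exists (maxn J1 B) => j hj m hm h1 h2.
cbv zeta.
have hJ1j : (J1 <= j)%N by lia.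
have hBj : (B <= j)%N by lia.
have hNm2 : (N j < qs m.+2)%N.
  rewrite -(ltr_nat R); apply: lt_le_trans h2 _.
  rewrite ler_pdivrMr //; rewrite ler_peMr //; lra.
have hmK : (K < m)%N.
  rewrite ltnNge; apply/negP => hmK.
  have : (qs m.+2 <= B)%N by exact: (@leq_bigmax _ (fun i : 'I_K.+1 => qs i.+2) (Ordinal (n := K.+1) (m := m) ltac:(lia))).
  have := hNj j; lia.
set q := qs m.
have hqm : (m <= q)%N by exact: hqk.
have h3N : (qs m.+1 <= 3 * N j)%N.
  rewrite -(ler_nat R) natrM; move: h1; rewrite ler_pdivrMr //; lra.
have hg : (q ^ 4 + 3 * q < qs m.+1)%N by exact: hgrow.
set M := (N j %/ q)%N.
set p := (q - 1)%N.
set M' := (q * M %/ p)%N.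
have q2 : (2 <= q)%N by lia.
have qE : q = p.+1 by rewrite /p; lia.
have hqN : (q < N j)%N by lia.
have hM := divn_eq (N j) q; have hMr := ltn_pmod (N j) (ltnW q2).
rewrite -/M in hM.
rewrite [(_ * q)%N]mulnC in hM.
have M1 : (0 < M)%N by rewrite divn_gt0; lia.
have p0 : (0 < p)%N by lia.
have hM' := divn_eq (q * M) p; have hM'r := ltn_pmod (q * M) p0.
rewrite -/M' [(_ * p)%N]mulnC in hM'.
have qqM := leq_pmulr q M1.
have M'1 : (0 < M')%N by rewrite divn_gt0 //; lia.
have ppM := leq_pmulr p M'1.
have c1 : (p.+1 <= p * M'.+1)%N by rewrite mulnS; lia.
have c2 : (p * M'.+1 <= q * M.+1)%N by rewrite !mulnS; lia.
have c3 : (q * M.+1 <= p * M'.+1 + p)%N by rewrite !mulnS; lia.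
have c4 : ((N j).+1 <= q * M.+1)%N by rewrite mulnS; lia.
have c5 : (q * M <= N j)%N by lia.
have c6 : (p * M' <= q * M)%N by lia.
have hq4 : (q ^ 4 <= 3 * N j)%N by lia.
have qM0 : (0 < q * M)%N by lia.
have pM0 : (0 < p * M')%N by lia.
have T1 := @T1eq R a q M qM0.
have T2 := @T2eq R a p M' pM0.
case: (pselect (exists c : nat, (c < q)%N /\ theta / (8 * q%:R) <= Aqm a q M c c)) => [H|hc]; first by left.
right; apply: contrapT => hd.
have hc' : forall c, (c < q)%N -> Aqm a q M c c < theta / (8 * q%:R).
  by move=> c hcq; rewrite ltNge; apply/negP => H; apply: hc; exists c.
have hd' : forall d, (d < p)%N -> - Aqm a p M' d.+1 d < theta / (8 * q%:R).
  by move=> d hdp; rewrite ltNge; apply/negP => H; apply: hd; exists d; split => //; lia.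
set x := theta / (8 * q%:R).
have x0 : 0 <= x by rewrite /x divr_ge0 // ?ltW // mulr_ge0 // ler0n.
have U1 : \sum_(0 <= c < q) (Aqm a q M c c * (q * M)%:R) <= q%:R * x * (q * M)%:R.
  apply: le_trans (ler_sum_nat (G := fun _ => x * (q * M)%:R) _) _.
    by move=> c /andP[_ hcq]; rewrite ler_pM2r ?ltr0n //; exact: ltW (hc' c hcq).
  by rewrite sumr_const_nat subn0 -[X in _ <= X]mulrA mulr_natl.
have U2 : - \sum_(0 <= d < p) (Aqm a p M' d.+1 d * (p * M')%:R) <= p%:R * x * (p * M')%:R.
  rewrite -sumrN; apply: le_trans (ler_sum_nat (G := fun _ => x * (p * M')%:R) _) _.
    by move=> d /andP[_ hdp]; rewrite -mulNr ler_pM2r ?ltr0n //; exact: ltW (hd' d hdp).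
  by rewrite sumr_const_nat subn0 -[X in _ <= X]mulrA mulr_natl.
rewrite T1 in U1; rewrite T2 in U2.
set S := \sum_(1 <= n < (N j).+1) `|a n|.
have hS : theta / 2 * (N j)%:R < S.
  have := HJ1 j hJ1j; rewrite /= [X in _ < X]mulrC ltr_pdivlMr // ltr0n; exact: leq_ltn_trans (leq0n q) hqN.
have hgb : forall t y, (1 <= y)%N -> `|gamma a y * a (y + t)%N| <= 1.
  move=> t y hy; have hs : `|Num.sg (a y)| <= 1 by rewrite normr_sg; case: (_ != 0).
  by rewrite normrM; apply: mulr_ile1 => //; apply: ha; apply: leq_trans hy (leq_addr _ _).
have E1 : \sum_(0 <= t < q) \sum_(q <= y < q * M.+1) gamma a y * a (y + t)%N =
   \sum_(q <= y < q * M.+1) `|a y| +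
   \sum_(0 <= t < p) \sum_(q <= y < q * M.+1) gamma a y * a (y + t.+1)%N.
  rewrite [in LHS]qE big_nat_recl // -qE; congr (_ + _).
  by apply: eq_bigr => y _; rewrite addn0 /gamma sgM_self.
have L1 : - (q%:R * p%:R) <= \sum_(0 <= t < p)
   (\sum_(q <= y < q * M.+1) gamma a y * a (y + t.+1)%N -
    \sum_(p <= y < p * M'.+1) gamma a y * a (y + t.+1)%N).
  apply: (@le_trans _ _ (\sum_(0 <= t < p) - (q%:R : R))).
    by rewrite sumr_const_nat subn0 mulr_natr mulNrn.
  apply: ler_sum_nat => t _.
  have := @diff_bound R (fun y => gamma a y * a (y + t.+1)%N) p (q * M.+1) (p * M'.+1)
     (fun y hy => hgb t.+1 y hy) p0 c1 c2 c3.
  by rewrite -qE.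
have L2 : S - q%:R <= \sum_(q <= y < q * M.+1) `|a y|.
  rewrite /S (big_cat_nat _ (m := 1) (n := q)) /=; [| exact: ltnW q2 | exact: leqW (ltnW hqN)].
  rewrite (big_cat_nat _ (m := q) (n := (N j).+1) (p := (q * M.+1)%N)) /=; [| exact: leqW (ltnW hqN) | exact: c4].
  have h1q : \sum_(1 <= n < q) `|a n| <= q%:R.
    apply: le_trans (ler_norm _) _.
    apply: le_trans (@sum_le_len R (fun n => `|a n|) 1 q _) _.
      by move=> y /andP[hy _]; rewrite normr_id; apply: ha.
    by rewrite ler_nat leq_subr.
  have h0 : 0 <= \sum_((N j).+1 <= n < q * M.+1) `|a n| by apply: sumr_ge0.
  lra.
have key : S - q%:R - q%:R * p%:R <=
   \sum_(0 <= t < q) \sum_(q <= y < q * M.+1) gamma a y * a (y + t)%N -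
   \sum_(0 <= t < p) \sum_(p <= y < p * M'.+1) gamma a y * a (y + t.+1)%N.
  rewrite sumrB in L1; rewrite E1; lra.
have hp : p%:R = q%:R - 1 :> R by rewrite qE -natr1 addrK.
have hqr1 : 2 <= q%:R :> R by rewrite ler_nat.
have hqM : (q * M)%:R <= (N j)%:R :> R by rewrite ler_nat; exact: c5.
have hpM : (p * M')%:R <= (q * M)%:R :> R by rewrite ler_nat; exact: c6.
have hpM0 : 0 <= (p * M')%:R :> R by apply: ler0n.
have hqx : q%:R * x = theta / 8.
  rewrite /x; field; rewrite pnatr_eq0 -lt0n; exact: ltnW q2.
have hpx : p%:R * x <= theta / 8 by rewrite -hqx ler_wpM2r // ler_nat leq_subr.
have hpx' : p%:R * x * (p * M')%:R <= theta / 8 * (p * M')%:R by rewrite ler_wpM2r.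
have h4 : q%:R ^+ 4 <= 3 * (N j)%:R :> R by rewrite -natrX -(natrM R 3) ler_nat.
have hKq : K%:R <= q%:R :> R by rewrite ler_nat; exact: leq_trans (ltnW hmK) hqm.
have h24 : 24 < theta * q%:R.
  move: hK; rewrite ltr_pdivrMr // => hK.
  by apply: lt_le_trans hK _; rewrite mulrC ler_wpM2l // ltW.
move: U1 U2 key hS hp hqM hpM hpM0 hqx hpx' h4 h24 hqr1 hth.
rewrite -/S.
move: (\sum_(0 <= t < q) _) (\sum_(0 <= t < p) _) => T1s T2s.
move: (q%:R) (p%:R) (N j)%:R (q * M)%:R (p * M')%:R => qr pr Nr qMr pMr.
move=> U1 U2 key hS hp hqM hpM hpM0 hqx hpx' h4 h24 hqr1 hth0.
have e1 : T1s <= theta / 8 * Nr.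
  rewrite hqx in U1; apply: le_trans U1 _; rewrite ler_wpM2l //; lra.
have e2 : - T2s <= theta / 8 * Nr.
  apply: le_trans U2 _; apply: le_trans hpx' _; rewrite ler_wpM2l //; lra.
have e3 : theta * Nr < 4 * qr ^+ 2 by rewrite hp in key; nra.
have e4 : theta * qr ^+ 4 <= 3 * (theta * Nr) by nra.
have e5 : 24 * qr ^+ 3 < theta * qr * qr ^+ 3 by rewrite ltr_pM2r // exprn_gt0 //; lra.
have e6 : qr ^+ 2 <= qr ^+ 3 by rewrite exprS ler_peMl // ?sqr_ge0 //; lra.
have e7 : theta * qr ^+ 4 = theta * qr * qr ^+ 3 by ring.
have e8 : 0 < qr ^+ 2 by rewrite exprn_gt0 //; lra.
lra.
Qed.
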